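(* Let $n,k$ be integers with $2\le k\le n$. Every $A\in\mathcal{S}^{n,k}$ has at most $n-k$ negative eigenvalues (counted with multiplicity).
   Context: For integers $2\le k\le n$, the $k$-PSD closure $\mathcal{S}^{n,k}$ is the set of all $n\times n$ real symmetric matrices all of whose $k\times k$ principal submatrices are positive semidefinite. *)

(* Defs.v *)
From mathcomp Require Import all_boot all_order all_algebra.
From mathcomp Require Import polyrcf.
From mathcomp Require Import reals.
Set Implicit Arguments. Unset Strict Implicit. Unset Printing Implicit Defensive.
Import Order.TTheory GRing.Theory Num.Theory.
Local Open Scope ring_scope.

Definition symmetric_mx (R : realType) (n : nat) (A : 'M[R]_n) : Prop :=
  A^T = A.

Definition psd_mx (R : realType) (n : nat) (A : 'M[R]_n) : Prop :=
  symmetric_mx A /\ forall x : 'cV[R]_n, 0 <= (x^T *m A *m x) 0 0.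

Definition principal_submx (R : realType) (n k : nat) (f : 'I_k -> 'I_n)
  (A : 'M[R]_n) : 'M[R]_k := \matrix_(i, j) A (f i) (f j).

Definition kPSD_closure (R : realType) (n k : nat) (A : 'M[R]_n) : Prop :=
  symmetric_mx A /\
  forall f : 'I_k -> 'I_n, (forall i j : 'I_k, (i < j)%N -> (f i < f j)%N) ->
    psd_mx (principal_submx f A).

Definition num_neg_eigenvalues (R : realType) (n : nat) (A : 'M[R]_n) : nat :=
  (\sum_(x <- rootsR (char_poly A) | (x < 0)%R) mup x (char_poly A))%N.

(* Main.v *)
Require Import Defs.
From mathcomp Require Import all_boot all_order all_algebra.
From mathcomp Require Import polyrcf reals.
From mathcomp Require Import complex spectral sesquilinear ring zify.
Set Implicit Arguments. Unset Strict Implicit. Unset Printing Implicit Defensive.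
Import Order.TTheory GRing.Theory Num.Theory.
Local Open Scope ring_scope.
Local Notation conjC := Num.conj.

Lemma quadE (T : comNzRingType) n (u v : 'rV[T]_n) (M : 'M[T]_n) :
  (u *m M *m v^T) 0 0 = \sum_i \sum_j u 0 i * M i j * v 0 j.
Proof.
rewrite mxE; under eq_bigr => j _ do rewrite !mxE mulr_suml.
by rewrite exchange_big.
Qed.

Lemma sum_widen (V : nmodType) n k (h : (k <= n)%N) (G : 'I_n -> V) :
  (forall i : 'I_n, (k <= i)%N -> G i = 0) ->
  \sum_(i < n) G i = \sum_(i < k) G (widen_ord h i).
Proof.
move=> G0; rewrite (bigID (fun i : 'I_n => (i < k)%N)) /= [X in _ + X]big1 ?addr0.
  by rewrite (big_ord_narrow h).
by move=> i; rewrite -leqNgt; apply: G0.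
Qed.

Lemma charpoly_sim (F : fieldType) n (P D : 'M[F]_n) : P \in unitmx ->
  char_poly (invmx P *m D *m P) = char_poly D.
Proof.
move=> Pu; rewrite /char_poly /char_poly_mx.
set Q := map_mx polyC P; set Q' := map_mx polyC (invmx P).
have QQ : Q' *m Q = 1%:M by rewrite -map_mxM mulVmx // map_mx1.
have -> : 'X%:M - map_mx polyC (invmx P *m D *m P) =
   Q' *m ('X%:M - map_mx polyC D) *m Q.
  rewrite !map_mxM mulmxBr mulmxBl -!mulmxA; congr (_ - _).
  by rewrite -scalar_mxC mulmxA QQ mul1mx.
rewrite !det_mulmx mulrC mulrA -det_mulmx.
by rewrite (_ : Q *m Q' = 1%:M) ?det1 ?mul1r // ; apply/mulmx1C.
Qed.

Lemma mup_prod (R : realType) n (r : 'I_n -> R) x :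
  mup x (\prod_i ('X - (r i)%:P)) = (\sum_i (r i == x))%N.
Proof.
suff : (\prod_i ('X - (r i)%:P) != 0) /\
   mup x (\prod_i ('X - (r i)%:P)) = (\sum_i (r i == x))%N by case.
elim/big_rec2: _ => [|i s p _ [p0 mp]].
  by rewrite oner_neq0 mupNroot // rootC oner_neq0.
rewrite mulf_neq0 ?polyXsubC_eq0 //; split => //.
rewrite mupM ?polyXsubC_eq0 // mp -(expr1 ('X - _)) mup_XsubCX.
by case: (r i == x).
Qed.

Lemma neg_count (R : realType) n (r : 'I_n -> R) (s : seq R) : uniq s ->
  (\sum_(x <- s | (x < 0)%R) \sum_i (r i == x) <= #|[set i | (r i < 0)%R]|)%N.
Proof.
move=> us; rewrite exchange_big /= -sum1_card.
rewrite [X in (_ <= X)%N]big_mkcond /=.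
apply: leq_sum => i _; rewrite inE.
have [ri0|ri0] := boolP (r i < 0).
  apply: leq_trans (_ : (\sum_(x <- s) (r i == x) <= 1)%N).
    rewrite big_mkcond /=; apply: leq_sum => x _; by case: ifP.
  rewrite (eq_bigr (fun x => if r i == x then 1 else 0)%N); last first.
    by move=> x _; case: eqP.
  rewrite -big_mkcond sum1_count.
  rewrite (eq_count (a2 := pred1 (r i))); last by move=> x /=; rewrite eq_sym.
  by rewrite (count_uniq_mem (r i) us) leq_b1.
rewrite big1 // => x x0; apply/eqP; rewrite eqb0; apply: contra ri0 => /eqP ->.
done.
Qed.

Section Cx.
Variable R : realType.

Lemma termE (a p q u v : R) :
  ((p +i* q) * a%:C * conjC (u +i* v) = (a * (p*u + q*v)) +i* (a * (q*u - p*v)))%C.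
Proof. rewrite /=. congr Complex; ring. Qed.

Lemma sumC I (s : seq I) (f g : I -> R) :
  (\sum_(i <- s) (f i +i* g i) = (\sum_(i <- s) f i) +i* (\sum_(i <- s) g i))%C.
Proof.
elim: s => [|a s IH]; first by rewrite !big_nil.
by rewrite !big_cons IH.
Qed.

Lemma herm_form n (A : 'M[R]_n) (x : 'rV[R[i]]_n) : A^T = A ->
  (x *m map_mx (real_complex R) A *m (map_mx conjC x)^T) 0 0 =
  ((map_mx (@complex.Re R) x *m A *m (map_mx (@complex.Re R) x)^T) 0 0 +
   (map_mx (@complex.Im R) x *m A *m (map_mx (@complex.Im R) x)^T) 0 0)%:C%C.
Proof.
move=> As; rewrite quadE !quadE.
have xE i : x 0 i = (complex.Re (x 0 i) +i* complex.Im (x 0 i))%C by case: (x 0 i).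
under eq_bigr => i _ do under eq_bigr => j _ do
  rewrite !mxE (xE i) (xE j) termE.
under eq_bigr => i _ do rewrite sumC.
rewrite sumC /=; congr Complex.
  rewrite -big_split /=; apply: eq_bigr => i _; rewrite -big_split /=.
  by apply: eq_bigr => j _; rewrite !mxE; ring.
under eq_bigr => i _ do under eq_bigr => j _ do rewrite mulrBr mulrA mulrA.
under eq_bigr => i _ do rewrite sumrB.
rewrite sumrB exchange_big /=.
apply/eqP; rewrite subr_eq0; apply/eqP; apply: eq_bigr => i _; apply: eq_bigr => j _.
have -> : A j i = A i j by rewrite -[in LHS]As mxE.
ring.
Qed.

End Cx.

Theorem proposition2 (R : realType) (n k : nat) (A : 'M[R]_n) :
  (2 <= k)%N -> (k <= n)%N -> kPSD_closure k A ->
  (num_neg_eigenvalues A <= n - k)%N.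
Proof.
move=> k2 hkn [As Hpsd].
have psdS : forall y : 'rV[R]_n, (forall j : 'I_n, (k <= j)%N -> y 0 j = 0) ->
    0 <= (y *m A *m y^T) 0 0.
  move=> y y0.
  have := (Hpsd (widen_ord hkn) (fun i j h => h)).2.
  move=> /(_ (\row_i y 0 (widen_ord hkn i))^T).
  rewrite trmxK !quadE (sum_widen hkn); last first.
    by move=> i ki; rewrite big1 // => j _; rewrite (y0 i ki) !mul0r.
  move=> H; apply: le_trans H _; rewrite le_eqVlt; apply/orP; left; apply/eqP.
  apply: eq_bigr => i _.
  rewrite (sum_widen hkn); last by move=> j kj; rewrite (y0 j kj) mulr0.
  by apply: eq_bigr => j _; rewrite !mxE.
set Ac := map_mx (real_complex R) A.
have Aherm : Ac \is hermsymmx.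
  apply: realsym_hermsym.
    apply/is_hermitianmxP; rewrite expr0 scale1r map_mx_id //.
    by rewrite /Ac map_trmx As.
  by apply/mxOverP => i j; rewrite mxE; apply/complex_realP; exists (A i j).
have /orthomx_spectralP AcE := hermitian_normalmx Aherm.
set P := spectralmx Ac in AcE; set d := spectral_diag Ac in AcE.
have dreal : d \is a realmx := hermitian_spectral_diag_real Aherm.
have Pu : P \is unitarymx := spectral_unitarymx Ac.
have Punit : P \in unitmx := spectral_unit Ac.
pose r i := complex.Re (d 0 i).
have dE i : d 0 i = (r i)%:C%C by rewrite /r RRe_real //; apply: (mxOverP dreal).
have cpA : char_poly A = \prod_i ('X - (r i)%:P).
  apply: (@map_poly_inj _ _ (real_complex R)).
  rewrite map_char_poly -/Ac AcE charpoly_sim // char_poly_trig ?diag_mx_is_trig //.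
  rewrite rmorph_prod; apply: eq_bigr => i _.
  by rewrite mxE eqxx mulr1n dE rmorphB /= map_polyX map_polyC.
have negle : (num_neg_eigenvalues A <= #|[set i | (r i < 0)%R]|)%N.
  rewrite /num_neg_eigenvalues cpA.
  under eq_bigr => x _ do rewrite mup_prod.
  by apply: neg_count; rewrite /rootsR; apply: uniq_roots.
apply: leq_trans negle _.
set N := [set i | (r i < 0)%R].
rewrite leqNgt; apply/negP => hgt.
pose g : 'I_#|N| -> 'I_n := enum_val.
have ginj : injective g := enum_val_inj.
have gN j : g j \in N := enum_valP j.
pose U := rowsub g P.
have rU : \rank U = #|N|.
  apply/eqP; apply/row_freeP; exists (invmx P *m (rowsub g 1%:M)^T).
  rewrite /U rowsubE mulmxA -(mulmxA _ P) mulmxV // mulmx1 -rowsubE.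
  apply/matrixP => i j; rewrite !mxE (inj_eq ginj) eq_sym.
  done.
pose V : 'M[R[i]]_(k, n) := pid_mx k.
have rV : \rank V = k by rewrite rank_pid_mx.
have capnz : (U :&: V)%MS != 0.
  rewrite -mxrank_eq0 -lt0n.
  have := mxrank_sum_cap U V; have := rank_leq_col (U + V)%MS.
  rewrite rU rV; lia.
set z := nz_row (U :&: V)%MS.
have z0 : z != 0 by rewrite nz_row_eq0.
have /submxP [w0 zU] : (z <= U)%MS.
  by apply: submx_trans (nz_row_sub _) (capmxSl _ _).
have /submxP [y zV] : (z <= V)%MS.
  by apply: submx_trans (nz_row_sub _) (capmxSr _ _).
have zk (j : 'I_n) : (k <= j)%N -> z 0 j = 0.
  move=> kj; rewrite zV mxE big1 // => l _; rewrite !mxE.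
  case: eqP => [lj|]; last by rewrite andFb mulr0.
  by rewrite /= lj ltnNge kj mulr0.
pose w := w0 *m rowsub g 1%:M.
have zw : z = w *m P by rewrite zU /U rowsubE mulmxA.
have wN i : i \notin N -> w 0 i = 0.
  move=> Ni; rewrite mxE big1 // => l _; rewrite !mxE.
  case: eqP => [gl|]; last by rewrite mulr0.
  by move: (gN l); rewrite gl (negbTE Ni).
have wnz : w != 0 by apply: contraNneq z0 => w0'; rewrite zw w0' mul0mx.
have qE : z *m Ac *m (map_mx conjC z)^T =
    w *m diag_mx d *m (map_mx conjC w)^T.
  rewrite zw AcE invmx_unitary // map_mxM trmx_mul !map_trmx.
  by rewrite !mulmxA !mulmxtVK.
have qsum : (w *m diag_mx d *m (map_mx conjC w)^T) 0 0 =
    \sum_i (r i)%:C%C * (w 0 i * conjC (w 0 i)).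
  rewrite mul_mx_diag mxE; apply: eq_bigr => i _.
  by rewrite !mxE dE mulrAC mulrC.
have [i0 wi0] : exists i, w 0 i != 0.
  apply/existsP; move: wnz; apply: contraNT; rewrite negb_exists => /forallP H.
  apply/eqP/rowP => i; move: (H i); rewrite negbK => /eqP ->.
  by rewrite mxE.
have i0N : i0 \in N by apply: contraT => Ni; rewrite wN ?eqxx in wi0.
have rneg i : i \in N -> (r i)%:C%C < 0 :> R[i].
  by rewrite inE => ri; rewrite -(rmorph0 (real_complex R)) ltcR.
have qneg : (z *m Ac *m (map_mx conjC z)^T) 0 0 < 0.
  rewrite qE qsum (bigD1 i0) //= -[X in _ < X](addr0 0).
  apply: ltr_leD.
    by rewrite nmulr_rlt0 ?rneg // mul_conjC_gt0.
  apply: sumr_le0 => i _.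
  have [iN|Ni] := boolP (i \in N).
    by rewrite nmulr_rle0 ?rneg // mul_conjC_ge0.
  by rewrite wN // mul0r mulr0.
have qpos : 0 <= (z *m Ac *m (map_mx conjC z)^T) 0 0.
  rewrite herm_form // ler0c; apply: addr_ge0; apply: psdS => j hj;
  by rewrite mxE zk.
by have := lt_le_trans qneg qpos; rewrite ltxx.
Qed.
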